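(* Let $R$ be a non-degenerate $n$-ary relation on a domain $\mathcal{D}$ with $n\ge2$. Then $\mathrm{ter}(R)\ge n-2$. In particular, every non-degenerate ternary relation is bond irreducible. If moreover $|R|\le|\mathcal{D}|$, then $\mathrm{ter}(R)=n-2$. In particular, $\mathrm{ter}(R)=n-2$ for all such (non-degenerate, $n\ge2$) relations on infinite domains $\mathcal{D}$.
   Context: Relations are attributed: $R\subseteq\mathcal{D}^\Sigma$, $\Sigma$ finite, arity $n=|\Sigma|$; $\pi_\Gamma$ restricts tuples to $\Gamma$; the join of $R_i\subseteq\mathcal{D}^{\Lambda_i}$ is $\{a\in\mathcal{D}^{\cup\Lambda_i}:a|_{\Lambda_i}\in R_i\ \forall i\}$. $R$ is degenerate if there is a partition $\Sigma=\Lambda_1\cup\dots\cup\Lambda_m$ with $m>1$, all $\Lambda_i\neq\emptyset$, and $R^{\Lambda_i}\subseteq\mathcal{D}^{\Lambda_i}$ with $R=\{a:a|_{\Lambda_i}\in R^{\Lambda_i}\ \forall i\}$. Bonds: relations $R_i\subseteq\mathcal{D}^{\Lambda_i}$ are bondable if no attribute lies in three or more $\Lambda_i$; their bond is $\pi_\Gamma[R_1\Join\dots\Join R_m]$, $\Gamma$ the set of attributes lying in exactly one $\Lambda_i$. $R$ is bond reducible if it is a bond of factors $R_i\subseteq\mathcal{D}^{\Lambda_i}$ with $0<|\Lambda_i|<|\Sigma|$, otherwise bond irreducible. A bond is subternaric if all factors have arity $\le3$. The ternarity $\mathrm{ter}(R)$ is the minimal number of factors of arity $3$ over all representations of $R$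 as a subternaric bond (a relation of arity $\le3$ counts as a one-factor bond of itself), and $\infty$ if none exists. *)

(* Defs.v *)
(* Attributes are natural numbers; a tuple is a
   total assignment a : nat -> D, and a relation R ⊆ D^Σ is represented by a
   predicate on assignments that only depends on the values at attributes in Σ
   (see [supported]).  Two assignments represent the same Σ-tuple iff they
   [agree] on Σ. *)
From Stdlib Require List.
From mathcomp Require Import all_boot.
Set Implicit Arguments. Unset Strict Implicit. Unset Printing Implicit Defensive.

Section Relations.
Variable D : Type.

Definition assignment := nat -> D.

Definition agree (S : seq nat) (a b : assignment) : Prop :=
  forall x, x \in S -> a x = b x.

Definition supported (S : seq nat) (P : assignment -> Prop) : Prop :=
  forall a b, agree S a b -> P a -> P b.

Definition is_relation (S : seq nat) (P : assignment -> Prop) : Prop :=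
  uniq S /\ supported S P.

Definition factor := (seq nat * (assignment -> Prop))%type.

Definition all_relations (Fs : seq factor) : Prop :=
  forall F, List.In F Fs -> is_relation F.1 F.2.

Definition occ (Fs : seq factor) (x : nat) : nat :=
  count (fun F : factor => x \in F.1) Fs.

Definition bondable (Fs : seq factor) : Prop :=
  forall x, occ Fs x <= 2.

Definition bond_attrs (Fs : seq factor) : seq nat :=
  undup [seq x <- flatten [seq F.1 | F <- Fs] | occ Fs x == 1].

Definition bond_pred (Fs : seq factor) (a : assignment) : Prop :=
  exists b : assignment, agree (bond_attrs Fs) a b /\
    (forall F, List.In F Fs -> F.2 b).

Definition is_bond_of (S : seq nat) (R : assignment -> Prop) (Fs : seq factor)
  : Prop :=
  all_relations Fs /\ bondable Fs /\
  (forall x, (x \in bond_attrs Fs) = (x \in S)) /\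
  (forall a, R a <-> bond_pred Fs a).

Definition bond_reducible (S : seq nat) (R : assignment -> Prop) : Prop :=
  exists Fs, is_bond_of S R Fs /\
    (forall F, List.In F Fs -> 0 < size F.1 < size S).

Definition bond_irreducible (S : seq nat) (R : assignment -> Prop) : Prop :=
  ~ bond_reducible S R.

Definition degenerate (S : seq nat) (R : assignment -> Prop) : Prop :=
  exists Fs : seq factor,
    1 < size Fs /\ all_relations Fs /\
    (forall F, List.In F Fs -> F.1 != [::]) /\
    (forall F, List.In F Fs -> {subset F.1 <= S}) /\
    (forall x, x \in S -> occ Fs x = 1) /\
    (forall a, R a <-> (forall F, List.In F Fs -> F.2 a)).

Definition subternaric (Fs : seq factor) : Prop :=
  forall F, List.In F Fs -> size F.1 <= 3.

Definition num_ternary (Fs : seq factor) : nat :=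
  count (fun F : factor => size F.1 == 3) Fs.

Definition subternaric_bond_of S R Fs : Prop :=
  is_bond_of S R Fs /\ subternaric Fs.

(* ter(R) >= k  (vacuously true when ter(R) = ∞) *)
Definition ter_ge (S : seq nat) (R : assignment -> Prop) (k : nat) : Prop :=
  forall Fs, subternaric_bond_of S R Fs -> k <= num_ternary Fs.

Definition ter_eq (S : seq nat) (R : assignment -> Prop) (k : nat) : Prop :=
  ter_ge S R k /\
  exists Fs, subternaric_bond_of S R Fs /\ num_ternary Fs = k.

Definition card_rel_le_dom (S : seq nat) (R : assignment -> Prop) : Prop :=
  exists f : assignment -> D,
    forall a b, R a -> R b -> f a = f b -> agree S a b.

End Relations.

Definition infinite_type (T : Type) : Prop :=
  ~ exists s : list T, forall x : T, List.In x s.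

(* Main.v *)
Require Import Defs.
From mathcomp Require Import all_boot zify.
From Stdlib Require Import Permutation Classical.
Set Implicit Arguments. Unset Strict Implicit. Unset Printing Implicit Defensive.

Section PartA.
Variable D : Type.
Notation assignment := (assignment D).
Notation factor := (factor D).
Implicit Types (Fs rest : seq factor) (a b : assignment) (F : factor) (R : assignment -> Prop) (S : seq nat).

Lemma agree_refl S a : agree S a a. Proof. by []. Qed.
Lemma agree_sym S a b : agree S a b -> agree S b a.
Proof. by move=> h x /h. Qed.
Lemma agree_trans S a b c : agree S a b -> agree S b c -> agree S a c.
Proof. by move=> h1 h2 x hx; rewrite h1 // h2. Qed.
Lemma agree_mem S1 S2 a b : (forall x, x \in S2 -> x \in S1) -> agree S1 a b -> agree S2 a b.
Proof. by move=> h1 h2 x /h1 /h2. Qed.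

Lemma In_count (T : Type) (p : pred T) s x : List.In x s -> p x -> 0 < count p s.
Proof.
elim: s => //= y s IH [<- px|hx px]; first by rewrite px.
by have := IH hx px; lia.
Qed.

Lemma count_split (T : Type) (p : pred T) s : 0 < count p s ->
  exists s1 y s2, s = s1 ++ y :: s2 /\ p y.
Proof.
elim: s => //= y s IH; case py: (p y) => /= h.
  by exists [::], y, s.
have [s1 [z [s2 [-> pz]]]] := IH h.
by exists (y :: s1), z, s2.
Qed.

Lemma count_perm (T : Type) (p : pred T) s t : Permutation s t -> count p s = count p t.
Proof.
elim=> //= [x l l' _ -> | x y l | l l' l'' _ -> _ ->] //.
by rewrite addnCA.
Qed.

Lemma mem_flatten_fst Fs x : (x \in flatten [seq F.1 | F <- Fs]) = (0 < occ Fs x).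
Proof.
rewrite /occ; elim: Fs => //= F Fs IH.
by rewrite mem_cat IH; case: (x \in F.1).
Qed.

Lemma mem_bond_attrs Fs x : (x \in bond_attrs Fs) = (occ Fs x == 1).
Proof.
rewrite /bond_attrs mem_undup mem_filter mem_flatten_fst.
by case: eqP => // ->.
Qed.

Lemma occ_perm Fs Fs' x : Permutation Fs Fs' -> occ Fs x = occ Fs' x.
Proof. exact: count_perm. Qed.

Lemma bond_pred_perm Fs Fs' a : Permutation Fs Fs' -> bond_pred Fs a -> bond_pred Fs' a.
Proof.
move=> hp [b [hab hF]]; exists b; split.
  by apply: agree_mem hab => x; rewrite !mem_bond_attrs (occ_perm _ hp).
by move=> F /(Permutation_in _ (Permutation_sym hp)) /hF.
Qed.

Lemma bond_pred_supported Fs : supported (bond_attrs Fs) (bond_pred Fs).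
Proof.
move=> a a' haa' [b [hab hF]]; exists b; split => //.
exact: agree_trans (agree_sym haa') hab.
Qed.

Lemma bond_single F a : is_relation F.1 F.2 -> (bond_pred [:: F] a <-> F.2 a).
Proof.
case=> _ hs; split.
  case=> b [hab /(_ F (or_introl erefl)) hb]; apply: hs hb.
  apply: agree_sym; apply: agree_mem hab => x hx.
  by rewrite mem_bond_attrs /occ /= hx.
by move=> h; exists a; split => // G [<-|].
Qed.

Lemma bond_cat Fs1 Fs2 a : all_relations (Fs1 ++ Fs2) -> bondable (Fs1 ++ Fs2) ->
  (bond_pred (Fs1 ++ Fs2) a <->
   exists b, agree (bond_attrs (Fs1 ++ Fs2)) a b /\ bond_pred Fs1 b /\ bond_pred Fs2 b).
Proof.
move=> hrel hbd; split.
  case=> b [hab hF]; exists b; split => //; split; exists b; split => // F hF'.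
    by apply: hF; apply: List.in_or_app; left.
  by apply: hF; apply: List.in_or_app; right.
case=> b [hab [[b1 [hb1 hF1]] [b2 [hb2 hF2]]]].
pose bs := fun y => if 0 < occ Fs1 y then b1 y else b2 y.
have occc y : occ (Fs1 ++ Fs2) y = occ Fs1 y + occ Fs2 y by rewrite /occ count_cat.
exists bs; split.
  move=> y; rewrite mem_bond_attrs occc => hy; rewrite /bs.
  case: ifP => h1.
    have h1' : occ Fs1 y == 1 by lia.
    by rewrite hab ?mem_bond_attrs ?occc // hb1 // mem_bond_attrs.
  have h2' : occ Fs2 y == 1 by lia.
  by rewrite hab ?mem_bond_attrs ?occc // hb2 // mem_bond_attrs.
move=> F hF0; case: (List.in_app_or _ _ _ hF0) => hF.
  have [_ hs] := hrel F (List.in_or_app _ _ _ (or_introl hF)).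
  apply: hs (hF1 F hF) => y hy; rewrite /bs.
  by have -> : 0 < occ Fs1 y by apply: (In_count (p := fun F : factor => y \in F.1)) hF _.
have [_ hs] := hrel F (List.in_or_app _ _ _ (or_intror hF)).
apply: hs (hF2 F hF) => y hy; rewrite /bs.
case: ifP => // h1.
have h2 : 0 < occ Fs2 y by apply: (In_count (p := fun F : factor => y \in F.1)) hF _.
have := hbd y; rewrite occc => hle.
have e1 : occ Fs1 y == 1 by lia.
have e2 : occ Fs2 y == 1 by lia.
by rewrite -hb1 ?mem_bond_attrs // hb2 // mem_bond_attrs.
Qed.


Lemma is_bond_perm S R Fs Fs' : Permutation Fs Fs' -> is_bond_of S R Fs -> is_bond_of S R Fs'.
Proof.
move=> hp [hr [hb [hm hR]]]; split; last split; last split.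
- by move=> F /(Permutation_in _ (Permutation_sym hp)) /hr.
- by move=> x; rewrite -(occ_perm _ hp).
- by move=> x; rewrite -hm !mem_bond_attrs (occ_perm _ hp).
- move=> a; split; first by move/hR/(bond_pred_perm hp).
  by move=> /(bond_pred_perm (Permutation_sym hp)) /hR.
Qed.

Definition phi Fs := sumn [seq size F.1 - 2 | F <- Fs].

Lemma phi_perm Fs Fs' : Permutation Fs Fs' -> phi Fs = phi Fs'.
Proof.
rewrite /phi; elim=> //= [x l l' _ -> | x y l | l l' l'' _ -> _ ->] //.
by rewrite addnCA.
Qed.

Lemma count_lt_size (T : eqType) (p : pred T) s x : x \in s -> ~~ p x -> count p s < size s.
Proof.
move=> xs npx; rewrite -(count_predC p s).
have : 0 < count (predC p) s by rewrite -has_count; apply/hasP; exists x.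
lia.
Qed.

Lemma merge_bond S R F F' rest x : x \in F.1 -> x \in F'.1 ->
  is_bond_of S R (F :: F' :: rest) ->
  is_bond_of S R ((bond_attrs [:: F; F'], bond_pred [:: F; F']) :: rest) /\
  size (bond_attrs [:: F; F']) - 2 <= (size F.1 - 2) + (size F'.1 - 2).
Proof.
move=> xF xF' [hr [hb [hm hR]]].
set F'' := (bond_attrs [:: F; F'], bond_pred [:: F; F']).
have o2 y : occ [:: F; F'] y <= 2 by exact: (count_size _ [:: F; F']).
have occ1 y : occ (F :: F' :: rest) y = occ [:: F; F'] y + occ rest y.
  by rewrite /occ -count_cat.
have occ2 y : occ (F'' :: rest) y = (occ [:: F; F'] y == 1) + occ rest y.
  by change (occ (F'' :: rest) y) with ((y \in F''.1) + occ rest y); rewrite mem_bond_attrs.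
have hb' : bondable (F'' :: rest).
  move=> y; have := hb y; rewrite occ1 occ2; have := o2 y; case: eqP; lia.
have hm' y : (y \in bond_attrs (F'' :: rest)) = (y \in bond_attrs (F :: F' :: rest)).
  rewrite !mem_bond_attrs occ1 occ2; have := hb y; rewrite occ1.
  have := o2 y; case: eqP; lia.
have hr' : all_relations (F'' :: rest).
  move=> G [<-|hG]; last by apply: hr; right; right.
  split; first exact: undup_uniq.
  exact: bond_pred_supported.
split; last first.
  rewrite /bond_attrs.
  apply: leq_trans (leq_sub2r 2 (size_undup _)) _ => /=.
  rewrite size_filter cats0 count_cat.
  have px : ~~ (occ [:: F; F'] x == 1) by rewrite /occ /= xF xF'.
  have h1 := count_lt_size (p := fun y => occ [:: F; F'] y == 1) xF px.
  have h2 := count_lt_size (p := fun y => occ [:: F; F'] y == 1) xF' px.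
  rewrite /occ /= in h1 h2; lia.
split => //; split => //; split; first by move=> y; rewrite hm' hm.
move=> a; rewrite hR.
change (F :: F' :: rest) with ([:: F; F'] ++ rest).
change (F'' :: rest) with ([:: F''] ++ rest).
have c1 := @bond_cat [:: F; F'] rest a hr hb.
have c2 := @bond_cat [:: F''] rest a hr' hb'.
have eqG : forall b, agree (bond_attrs ([:: F; F'] ++ rest)) a b <->
                 agree (bond_attrs ([:: F''] ++ rest)) a b.
  by move=> b; split; apply: agree_mem => y; rewrite /= hm'.
have e1 b : bond_pred [:: F''] b <-> bond_pred [:: F; F'] b.
  by apply: bond_single; apply: hr'; left.
split=> hh.
  apply/c2; case/c1: hh => b [h1 [h2 h3]]; exists b.
  by split; [exact/eqG | split => //; exact/e1].
apply/c1; case/c2: hh => b [h1 [h2 h3]]; exists b.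
by split; [exact/eqG | split => //; exact/e1].
Qed.


Lemma In_map (T U : Type) (f : T -> U) s z : List.In z (map f s) -> exists y, List.In y s /\ z = f y.
Proof.
elim: s => //= y s IH [<-|/IH [w [h ->]]]; first by exists y; split => //; left.
by exists w; split => //; right.
Qed.

Lemma In_mem (T : eqType) (s : seq T) x : List.In x s <-> x \in s.
Proof.
elim: s => //= y s IH; rewrite in_cons; split.
  by case=> [->|/IH ->]; rewrite ?eqxx ?orbT.
by case/orP => [/eqP ->|/IH]; [left|right].
Qed.

Lemma In_filter (T : Type) (p : pred T) s x : List.In x (filter p s) <-> List.In x s /\ p x.
Proof.
elim: s => //= [|y s IH]; first by split => [[]|[]].
case py: (p y) => /=; split.
- by case=> [<-|/IH [h1 h2]]; split => //; [left|right].
- by case=> [[->|h] px]; [left|right; exact/IH].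
- by move/IH => [h1 h2]; split => //; right.
- by case=> [[e|h] px]; [subst; rewrite px in py|exact/IH].
Qed.

Lemma empty_degenerate S R : uniq S -> 2 <= size S -> (forall a, ~ R a) -> degenerate S R.
Proof.
move=> uS hS hR.
exists [seq ([:: y], fun _ : assignment => False) | y <- S].
split; first by rewrite size_map.
split.
  move=> F hF; have [y [_ ->]] := In_map hF; split => // a b _ [].
split; first by move=> F hF; have [y [_ ->]] := In_map hF.
split.
  by move=> F hF; have [y [/In_mem h ->]] := In_map hF; move=> z /=; rewrite inE => /eqP ->.
split.
  move=> x xS; rewrite /occ count_map.
  have <- : count (pred1 x) S = 1 by rewrite (count_uniq_mem x uS) xS.
  by apply: eq_count => y /=; rewrite inE eq_sym.
move=> a; split => [/hR []|].
case: S uS hS => // y S' _ _ /(_ ([:: y], fun _ => False)) [].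
by left.
Qed.

Lemma phi_filter (p : pred factor) Fs : phi (filter p Fs) <= phi Fs.
Proof.
rewrite /phi; elim: Fs => //= F Fs IH; case: (p F) => /=; lia.
Qed.

Lemma occ_filter_nonempty Fs x :
  occ (filter (fun F : factor => F.1 != [::]) Fs) x = occ Fs x.
Proof.
rewrite /occ; elim: Fs => //= F Fs IH; case: F => [[|y l] P] /=; rewrite IH //.
Qed.

Lemma cat_app (T : Type) (s1 s2 : seq T) : s1 ++ s2 = (s1 ++ s2)%list.
Proof. by elim: s1 => //= x s1 ->. Qed.

Lemma perm_mid (T : Type) (l1 l2 : seq T) (z : T) : Permutation (l1 ++ z :: l2) (z :: l1 ++ l2).
Proof. rewrite !cat_app; exact: Permutation_sym (Permutation_middle _ _ _). Qed.

Lemma ter_key S R : is_relation S R -> 2 <= size S -> ~ degenerate S R ->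
  forall Fs, is_bond_of S R Fs -> size S - 2 <= phi Fs.
Proof.
move=> [uS sR] hS hnd Fs.
move: {2}(size Fs) (leqnn (size Fs)) => m; elim: m Fs => [|m IH] Fs hsz hB.
  case: Fs hsz hB => // _ [_ [_ [hm _]]].
  case: S uS sR hS hnd hm => // y S' _ _ _ _ /(_ y).
  by rewrite mem_bond_attrs inE eqxx.
have [hid|nohid] := boolP (has (fun x => occ Fs x == 2) (flatten [seq F.1 | F <- Fs])).
  case/hasP: hid => x _ /eqP hx.
  have [L1 [F [L2 [eFs xF]]]] := @count_split _ (fun F : factor => x \in F.1) Fs
    ltac:(rewrite -/(occ Fs x) hx //).
  have hx2 : occ (L1 ++ L2) x = 1.
    by move: hx; rewrite eFs /occ !count_cat /= xF; lia.
  have [M1 [F' [M2 [eL xF']]]] := @count_split _ (fun F : factor => x \in F.1) (L1 ++ L2)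
    ltac:(rewrite -/(occ (L1 ++ L2) x) hx2 //).
  have hp : Permutation Fs (F :: F' :: (M1 ++ M2)).
    rewrite eFs; apply: Permutation_trans (perm_mid _ _ _) _.
    apply: perm_skip; rewrite eL; exact: perm_mid.
  have hB' := is_bond_perm hp hB.
  have [hB'' hsz''] := merge_bond xF xF' hB'.
  have := IH _ _ hB''.
  rewrite (phi_perm hp) /phi /= -/(phi (M1 ++ M2)).
  have hl1 : size Fs = (size (L1 ++ L2)).+1 by rewrite eFs !size_cat /=; lia.
  have hl2 : size (L1 ++ L2) = (size (M1 ++ M2)).+1 by rewrite eL !size_cat /=; lia.
  move=> h; have {}h := h ltac:(rewrite /= ; lia).
  lia.
have [_ [hbd [hm hR]]] := hB.
have vis F y : List.In F Fs -> y \in F.1 -> y \in S.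
  move=> hF hy; rewrite -hm mem_bond_attrs.
  have h1 : 0 < occ Fs y by apply: (In_count (p := fun F : factor => y \in F.1)) hF _.
  have h2 := hbd y.
  have h3 : occ Fs y != 2.
    apply: contra nohid => e; apply/hasP; exists y => //.
    by rewrite mem_flatten_fst.
  lia.
have hR' a : R a <-> (forall F, List.In F Fs -> F.2 a).
  rewrite hR; split.
    case=> b [hab hF] F hF'; have [_ hs] := hB.1 F hF'.
    apply: hs (hF F hF') => y hy; symmetry; apply: hab.
    by rewrite hm; exact: vis hF' hy.
  by move=> h; exists a; split.
have [[a0 Ra0]|nR] := classic (exists a, R a); last first.
  by case: hnd; apply: empty_degenerate => // a Ra; apply: nR; exists a.
set Fs1 := filter (fun F : factor => F.1 != [::]) Fs.
have hR1 a : R a <-> (forall F, List.In F Fs1 -> F.2 a).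
  rewrite hR'; split => h F.
    by move/In_filter => [hF _]; exact: h.
  move=> hF; case e: (F.1 != [::]); first by apply: h; apply/In_filter.
  have [_ hs] := hB.1 F hF; apply: hs ((proj1 (hR' a0) Ra0) F hF) => y.
  by move/negbFE: e => /eqP ->.
have hocc x : x \in S -> occ Fs1 x = 1.
  by move=> xS; rewrite occ_filter_nonempty; apply/eqP; rewrite -mem_bond_attrs hm.
case: (ltnP 1 (size Fs1)) => hs1.
  case: hnd; exists Fs1; split => //; split.
    by move=> F /In_filter [hF _]; exact: hB.1 F hF.
  split; first by move=> F /In_filter [].
  split; first by move=> F /In_filter [hF _] y; exact: vis.
  by split.
have [y yS] : exists y, y \in S by case: (S) hS => // y ? _; exists y; rewrite mem_head.
have := hocc y yS.
case E: Fs1 hs1 => [|F [|F2 l]] //= _ _.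
have sub : {subset S <= F.1}.
  move=> z /hocc; rewrite E /occ /=; case: (z \in F.1) => //.
have := uniq_leq_size uS sub.
have := phi_filter (fun F : factor => F.1 != [::]) Fs; rewrite -/Fs1 E /phi /=.
lia.
Qed.

End PartA.


Section PartB.
Variable D : Type.
Notation assignment := (assignment D).
Notation factor := (factor D).
Variables (S : seq nat) (R : assignment -> Prop) (f : assignment -> D).
Hypothesis hf : forall a b, R a -> R b -> f a = f b -> agree S a b.
Implicit Types (a b : assignment).

Definition P0 (x u : nat) : assignment -> Prop :=
  fun a => exists t, R t /\ f t = a u /\ t x = a x.

Fixpoint chain (L : seq nat) (u : nat) : seq factor :=
  match L with
  | [::] => [::]
  | x :: L' => match L' with
     | [::] => [:: ([:: x; u], P0 x u)]
     | _ => ([:: x; u; u.+1], fun a => P0 x u a /\ a u.+1 = a u) :: chain L' u.+1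
     end
  end.

Lemma P0_rel x u : x < u -> is_relation [:: x; u] (P0 x u).
Proof.
move=> xu; split; first by rewrite /= inE andbT; apply/eqP => e; move: xu; rewrite e ltnn.
move=> a b hab [t [Rt [e1 e2]]]; exists t; split => //.
by rewrite -!hab ?inE ?eqxx ?orbT.
Qed.

Lemma chain_prop L u : L != [::] -> uniq L -> {subset L <= S} -> (forall x, x \in L -> x < u) ->
  [/\ all_relations (chain L u),
      forall y, occ (chain L u) y = (y \in L) + (y == u) + ((u < y) && (y < u + size L)) * 2,
      forall a, bond_pred (chain L u) a <-> exists t, R t /\ f t = a u /\ agree L t a,
      num_ternary (chain L u) = (size L).-1 &
      subternaric (chain L u)].
Proof.
elim: L u => // x L' IH u _ /andP [xL' uL'] sub lt.
have xu : x < u by apply: lt; rewrite mem_head.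
case: L' IH xL' uL' sub lt => [|x' L''] IH xL' uL' sub lt.
  split.
  - by move=> F [<-|[]]; apply: P0_rel.
  - by move=> y; rewrite /occ /= !inE; lia.
  - move=> a; rewrite bond_single; last exact: P0_rel.
    split; case=> t [Rt [e1 e2]]; exists t; split => //; split => //.
      by move=> y; rewrite inE => /eqP ->.
    by apply: e2; rewrite inE.
  - by [].
  - by move=> F [<-|[]].
set L' := x' :: L''.
have [||||hr hocc hbond hnt hst] := IH u.+1 => //.
- by move=> y hy; apply: sub; rewrite inE hy orbT.
- by move=> y hy; apply: leqW; apply: lt; rewrite inE hy orbT.
have ltL y : y \in L' -> y < u by move=> hy; apply: lt; rewrite inE hy orbT.
set F := ([:: x; u; u.+1], fun a => P0 x u a /\ a u.+1 = a u).
change (chain [:: x, x' & L''] u) with (F :: chain L' u.+1).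
have Frel : is_relation F.1 F.2.
  split; first by rewrite /= !inE negb_or; apply/and3P; split => //=; apply/negP; lia.
  move=> a b hab [[t [Rt [e1 e2]]] e3]; split.
    by exists t; split => //; rewrite -!hab ?inE ?eqxx ?orbT.
  by rewrite -!hab ?inE ?eqxx ?orbT.
have occF y : occ (F :: chain L' u.+1) y =
   (y \in x :: L') + (y == u) + ((u < y) && (y < u + size (x :: L'))) * 2.
  rewrite /occ /= -/(occ _ _) hocc.
  have -> : (y \in [:: x; u; u.+1]) = [|| y == x, y == u | y == u.+1] by rewrite !inE.
  rewrite [y \in x :: L']in_cons.
  case: (eqVneq y x) => [->|nyx].
    rewrite (negbTE xL') /=; lia.
  rewrite /=.
  case yL: (y \in L') => /=; [have := ltL y yL|]; lia.
have hr' : all_relations (F :: chain L' u.+1) by move=> G [<-|/hr].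
have hbd : bondable (F :: chain L' u.+1).
  move=> y; rewrite occF; case yL: (y \in x :: L').
    have := lt y yL; lia.
  lia.
split => //.
- move=> a.
  have c := @bond_cat _ [:: F] (chain L' u.+1) a hr' hbd.
  have memG y : (y \in bond_attrs ([:: F] ++ chain L' u.+1)) = (y \in x :: L') || (y == u).
    rewrite mem_bond_attrs occF; case yL: (y \in x :: L').
      have := lt y yL; lia.
    lia.
  split.
    case/c => b [hab [hb1 /hbond [t' [Rt' [e4 e5]]]]].
    have [[t [Rt [e1 e2]]] e3] := (bond_single b Frel).1 hb1.
    have htt := hf Rt Rt' (etrans e1 (etrans (esym e3) (esym e4))).
    exists t; split => //; split; first by rewrite e1 hab // memG eqxx orbT.
    move=> y; rewrite inE => /orP [/eqP ->|yL].
      by rewrite e2 hab // memG mem_head.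
    rewrite htt; last by apply: sub; rewrite inE yL orbT.
    by rewrite e5 // hab // memG inE yL orbT.
  case=> t [Rt [e1 e2]].
  pose b := fun y => if y == u.+1 then a u else a y.
  apply/c; exists b; split.
    move=> y; rewrite memG /b => /orP [yL|/eqP ->]; last by rewrite (ltn_eqF (ltnSn u)).
    by have := lt y yL; case: eqP => // ->; lia.
  split.
    apply/(bond_single b Frel); split; last by rewrite /b eqxx (ltn_eqF (ltnSn u)).
    exists t; split => //; rewrite /b (ltn_eqF (ltnSn u)) e1; split => //.
    have -> : (x == u.+1) = false by apply/negP => /eqP e; move: xu; rewrite e; lia.
    by rewrite e2 // mem_head.
  apply/hbond; exists t; split => //; split; first by rewrite /b eqxx.
  move=> y yL; rewrite /b; have := ltL y yL; case: eqP => [->|_ _]; first by lia.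
  by rewrite e2 // inE yL orbT.
- have -> : num_ternary (F :: chain L' u.+1) = (size F.1 == 3) + num_ternary (chain L' u.+1) by [].
  by rewrite hnt.
- by move=> G [<-|/hst].
Qed.

Lemma sumn_ge (s : seq nat) x : x \in s -> x <= sumn s.
Proof.
elim: s => //= y s IH; rewrite inE => /orP [/eqP ->|/IH]; lia.
Qed.

Lemma construct : is_relation S R -> 2 <= size S ->
  exists Fs, subternaric_bond_of S R Fs /\ num_ternary Fs = size S - 2.
Proof.
move=> hSR hS.
have [s1 [L eS]] : exists s1 L, S = s1 :: L by case: (S) hS => // s1 L _; exists s1, L.
move: hSR hS; rewrite eS => -[uS sR] hS.
have hf' a b : R a -> R b -> f a = f b -> agree (s1 :: L) a b by rewrite -eS; exact: hf.
have Lnil : L != [::] by case: (L) hS.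
move: (uS) => /andP [s1L uL].
set u := (sumn (s1 :: L)).+1.
have ltS y : y \in s1 :: L -> y < u by move=> /sumn_ge; rewrite /u; lia.
have [||||hr hocc hbond hnt hst] := @chain_prop L u => //.
- by move=> y yL; rewrite eS inE yL orbT.
- by move=> y yL; apply: ltS; rewrite inE yL orbT.
set F := ([:: s1; u], P0 s1 u).
have Frel : is_relation F.1 F.2 by apply: P0_rel; apply: ltS; rewrite mem_head.
have occF y : occ (F :: chain L u) y =
   (y \in s1 :: L) + (y == u) * 2 + ((u < y) && (y < u + size L)) * 2.
  rewrite /occ /= -/(occ _ _) hocc !inE.
  case: (eqVneq y s1) => [->|nyx].
    have := ltS s1 (mem_head _ _); rewrite (negbTE s1L) /=; lia.
  case yL: (y \in L) => /=.
    by have := ltS y; rewrite inE yL orbT => /(_ isT); lia.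
  lia.
have hr' : all_relations (F :: chain L u) by move=> G [<-|/hr].
have hbd : bondable (F :: chain L u).
  move=> y; rewrite occF; case yL: (y \in s1 :: L).
    have := ltS y yL; lia.
  lia.
have memG y : (y \in bond_attrs ([:: F] ++ chain L u)) = (y \in s1 :: L).
  rewrite mem_bond_attrs occF; case yL: (y \in s1 :: L).
    have := ltS y yL; lia.
  lia.
exists (F :: chain L u); split; last first.
  have -> : num_ternary (F :: chain L u) = (size F.1 == 3) + num_ternary (chain L u) by [].
  rewrite hnt /=; have : 0 < size L by case: (L) Lnil.
  lia.
split; last by move=> G [<-|/hst].
split => //; split => //; split; first exact: memG.
move=> a.
have c := @bond_cat _ [:: F] (chain L u) a hr' hbd.
split.
  move=> Ra; pose b := fun y => if y == u then f a else a y.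
  apply/c; exists b; split.
    move=> y; rewrite memG /b => yS; have := ltS y yS; case: eqP => // ->; lia.
  split.
    apply/(bond_single b Frel); exists a; split => //; rewrite /b eqxx; split => //.
    by have := ltS s1 (mem_head _ _); case: eqP => // ->; lia.
  apply/hbond; exists a; split => //; split; first by rewrite /b eqxx.
  move=> y yL; rewrite /b; have := ltS y; rewrite inE yL orbT => /(_ isT).
  by case: eqP => // ->; lia.
case/c => b [hab [hb1 /hbond [t' [Rt' [e4 e5]]]]].
have [t [Rt [e1 e2]]] := (bond_single b Frel).1 hb1.
have htt := hf' _ _ Rt Rt' (etrans e1 (esym e4)).
apply: sR Rt => y; rewrite inE => /orP [/eqP ->|yL].
  by rewrite e2 hab // memG mem_head.
by rewrite htt ?inE ?yL ?orbT // e5 // hab // memG inE yL orbT.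
Qed.

End PartB.

From mathcomp Require Import boolp classical_sets.

Section Hessenberg.
Variable D : Type.
Hypothesis infD : infinite_type D.

Lemma next_exists (s : list D) : exists x, ~ List.In x s.
Proof.
apply: contrapT => h; apply: infD; exists s => x.
by apply: contrapT => hx; apply: h; exists x.
Qed.

Definition nxt (s : list D) : D := proj1_sig (cid (next_exists s)).
Lemma nxtP s : ~ List.In (nxt s) s.
Proof. exact: proj2_sig (cid (next_exists s)). Qed.

Fixpoint glist (n : nat) : list D :=
  match n with 0 => nil | n'.+1 => nxt (glist n') :: glist n' end.
Definition iota_inj (n : nat) : D := nxt (glist n).

Lemma glist_in m n : (m < n)%N -> List.In (iota_inj m) (glist n).
Proof.
elim: n => // n IH; rewrite ltnS leq_eqVlt => /orP [/eqP ->|/IH h] /=; [left|right] => //.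
Qed.

Lemma iota_injP : injective iota_inj.
Proof.
move=> m n e; case: (ltngtP m n) => // h.
  by have := glist_in h; rewrite e => /nxtP.
by have := glist_in h; rewrite -e => /nxtP.
Qed.

Local Open Scope classical_set_scope.

Notation T := ((D * D) * D)%type.
Implicit Types G : set T.

Definition Adom G x := exists z, G ((x, x), z).

Definition good G :=
  [/\ (forall p z z', G (p, z) -> G (p, z') -> z = z'),
      (forall p p' z, G (p, z) -> G (p', z) -> p = p'),
      (forall x y z, G ((x, y), z) -> [/\ Adom G x, Adom G y & Adom G z]),
      (forall x y, Adom G x -> Adom G y -> exists z, G ((x, y), z)) &
      ((forall t, ~ G t) \/ exists a0 a1 a2, (Adom G a0 /\ Adom G a1 /\ Adom G a2) /\
            (a0 <> a1 /\ a0 <> a2 /\ a1 <> a2))].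

Lemma Adom_mono G G' x : G `<=` G' -> Adom G x -> Adom G' x.
Proof. by move=> h [z hz]; exists z; apply: h. Qed.

Lemma good_chain (F : set (set T)) : F `<=` good -> total_on F subset ->
  good (\bigcup_(X in F) X).
Proof.
move=> hF htot.
have big X1 X2 : F X1 -> F X2 -> exists X, [/\ F X, X1 `<=` X & X2 `<=` X].
  move=> h1 h2; case: (htot _ _ h1 h2) => h.
    by exists X2; split.
  by exists X1; split.
have sub X : F X -> X `<=` \bigcup_(X in F) X by move=> h t ht; exists X.
split.
- move=> p z z' [X1 h1 t1] [X2 h2 t2]; have [X [hX s1 s2]] := big _ _ h1 h2.
  by have [f1 _ _ _ _] := hF _ hX; apply: f1 (s1 _ t1) (s2 _ t2).
- move=> p p' z [X1 h1 t1] [X2 h2 t2]; have [X [hX s1 s2]] := big _ _ h1 h2.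
  by have [_ f2 _ _ _] := hF _ hX; apply: f2 (s1 _ t1) (s2 _ t2).
- move=> x y z [X hX t]; have [_ _ f3 _ _] := hF _ hX.
  by have [a1 a2 a3] := f3 _ _ _ t; split; apply: Adom_mono (sub _ hX) _.
- move=> x y [z1 [X1 h1 t1]] [z2 [X2 h2 t2]]; have [X [hX s1 s2]] := big _ _ h1 h2.
  have [_ _ _ f4 _] := hF _ hX.
  have [z hz] := f4 x y (ex_intro _ z1 (s1 _ t1)) (ex_intro _ z2 (s2 _ t2)).
  by exists z; exists X.
- have [[t [X hX tX]]|nt] := pselect (exists t, (\bigcup_(X in F) X) t); last first.
    by left => t ht; apply: nt; exists t.
  right; have [_ _ _ _ [h|[a0 [a1 [a2 [[b0 [b1 b2]] nn]]]]]] := hF _ hX.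
    by case: (h t).
  by exists a0, a1, a2; split => //; split; [|split]; apply: Adom_mono (sub _ hX) _.
Qed.

Definition G0 : set T := fun t => exists m n,
  t = ((iota_inj m, iota_inj n), iota_inj (pickle (m, n))).

Lemma good_G0 : good G0.
Proof.
have ad m : Adom G0 (iota_inj m) by exists (iota_inj (pickle (m, m))); exists m, m.
split.
- move=> p z z' [m [n e]] [m' [n' e']].
  move: e e' => [-> ->] [e1 e2 ->].
  by rewrite (iota_injP e1) (iota_injP e2).
- move=> p p' z [m [n e]] [m' [n' e']].
  move: e e' => [-> ->] [-> e2].
  by move/iota_injP/(pcan_inj pickleK): e2 => [-> ->].
- by move=> x y z [m [n [-> -> ->]]].
- move=> x y [z1 [m [n [-> _ _]]]] [z2 [m' [n' [-> _ _]]]].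
  by exists (iota_inj (pickle (m, m'))); exists m, m'.
- right; exists (iota_inj 0), (iota_inj 1), (iota_inj 2).
  by split; [split; [|split] | split; [|split]] => // /iota_injP.
Qed.


Lemma hessenberg : exists e : D -> D -> D,
  forall x y x' y', e x y = e x' y' -> x = x' /\ y = y'.
Proof.
have [G [gG maxG]] := Zorn_bigcup good_chain.
have [fG1 fG2 fG3 fG4 fG5] := gG.
pose A := Adom G.
have [a0 [a1 [a2 [[h0 [h1 h2]] [n01 [n02 n12]]]]]] : exists a0 a1 a2,
    (A a0 /\ A a1 /\ A a2) /\ (a0 <> a1 /\ a0 <> a2 /\ a1 <> a2).
  case: fG5 => // hG; exfalso; apply: (maxG G0 _ good_G0); split; first by move=> t /hG.
  move=> sub; apply: (hG ((iota_inj 0, iota_inj 0), iota_inj (pickle (0, 0)))).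
  by apply: sub; exists 0, 0.
have hz x y : exists z, A x /\ A y -> G ((x, y), z).
  case: (pselect (A x /\ A y)) => [[ax ay]|n]; last by exists a0.
  by have [z hz] := fG4 _ _ ax ay; exists z.
pose f x y := proj1_sig (cid (hz x y)).
have fG x y : A x -> A y -> G ((x, y), f x y).
  by move=> ax ay; exact: (proj2_sig (cid (hz x y))) (conj ax ay).
have Gchar x y z : G ((x, y), z) -> [/\ A x, A y & z = f x y].
  move=> g; have [ax ay _] := fG3 _ _ _ g; split => //; exact: fG1 g (fG x y ax ay).
have fA x y : A x -> A y -> A (f x y).
  by move=> ax ay; have [_ _] := fG3 _ _ _ (fG x y ax ay).
have finj x y x' y' : A x -> A y -> A x' -> A y' -> f x y = f x' y' -> x = x' /\ y = y'.
  move=> ax ay ax' ay' e; have g1 := fG x y ax ay; rewrite e in g1.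
  by have := fG2 _ _ _ g1 (fG x' y' ax' ay') => -[].
pose goodH (H : set (D * D)) :=
  [/\ (forall a c c', H (a, c) -> H (a, c') -> c = c'),
      (forall a a' c, H (a, c) -> H (a', c) -> a = a') &
      (forall a c, H (a, c) -> A a /\ ~ A c)].
have chainH (F : set (set (D * D))) : F `<=` goodH -> total_on F subset ->
    goodH (\bigcup_(X in F) X).
  move=> hF htot.
  have big X1 X2 : F X1 -> F X2 -> exists X, [/\ F X, X1 `<=` X & X2 `<=` X].
    move=> k1 k2; case: (htot _ _ k1 k2) => h.
      by exists X2; split.
    by exists X1; split.
  split.
  - move=> a c c' [X1 k1 t1] [X2 k2 t2]; have [X [hX s1 s2]] := big _ _ k1 k2.
    by have [q _ _] := hF _ hX; apply: q (s1 _ t1) (s2 _ t2).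
  - move=> a a' c [X1 k1 t1] [X2 k2 t2]; have [X [hX s1 s2]] := big _ _ k1 k2.
    by have [_ q _] := hF _ hX; apply: q (s1 _ t1) (s2 _ t2).
  - by move=> a c [X hX t]; have [_ _ q] := hF _ hX; apply: q.
have [H [goodHH maxH]] := Zorn_bigcup chainH.
have [hH1 hH2 hH3] := goodHH.
case: (pselect (forall a, A a -> exists c, H (a, c))) => [totH|ntotH].
  exfalso.
  have hg a : exists c, A a -> H (a, c).
    case: (pselect (A a)) => [aa|na]; last by exists a0.
    by have [c hc] := totH a aa; exists c.
  pose g a := proj1_sig (cid (hg a)).
  have gH a : A a -> H (a, g a) by move=> aa; exact: (proj2_sig (cid (hg a))) aa.
  have gA a : A a -> ~ A (g a) by move=> aa; exact: (hH3 _ _ (gH a aa)).2.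
  have ginj a a' : A a -> A a' -> g a = g a' -> a = a'.
    move=> aa aa' e; have k := gH a aa; rewrite e in k; exact: hH2 k (gH a' aa').
  pose gb (b : bool) x := if b then g x else x.
  pose sel (bx by' : bool) := if bx then (if by' then a2 else a1) else a0.
  have selA bx by' : A (sel bx by') by rewrite /sel; case: bx; case: by'.
  pose code bx by' x y := if bx || by' then g (f (sel bx by') (f x y)) else f x y.
  pose G' : set T := fun t => exists bx by' x y,
    [/\ A x, A y & t = ((gb bx x, gb by' y), code bx by' x y)].
  have gbinj b b' x x' : A x -> A x' -> gb b x = gb b' x' -> b = b' /\ x = x'.
    case: b; case: b' => /= ax ax' e.
    - by split => //; exact: ginj.
    - by case: (gA _ ax); rewrite e.
    - by case: (gA _ ax'); rewrite -e.
    - by [].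
  have codeA bx by' x y : A x -> A y -> exists w, A w /\ code bx by' x y = gb (bx || by') w.
    rewrite /code => ax ay; case: (bx || by') => /=.
      by exists (f (sel bx by') (f x y)); split => //; apply: (fA) => //; exact: fA.
    by exists (f x y); split => //; exact: fA.
  have codeinj bx by' x y bx' by'' x' y' : A x -> A y -> A x' -> A y' ->
      code bx by' x y = code bx' by'' x' y' -> [/\ bx = bx', by' = by'', x = x' & y = y'].
    move=> ax ay ax' ay'.
    rewrite /code; case E1: (bx || by'); case E2: (bx' || by'') => e.
    - have := fA _ _ (selA bx by') (fA _ _ ax ay).
      have := fA _ _ (selA bx' by'') (fA _ _ ax' ay').
      move=> A1 A2; have {}e := ginj _ _ A2 A1 e.
      have [e1 /finj [//|//|//|//|-> ->]] := finj _ _ _ _ (selA _ _) (fA _ _ ax ay) (selA _ _)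
         (fA _ _ ax' ay') e.
      move: e1 E1 E2; rewrite /sel; clear A1 A2 e.
      case: bx; case: by'; case: bx'; case: by'' => //= e1 _ _;
        first [ by split | by case: n01 | by case: n02 | by case: n12 ].
    - by case: (gA _ (fA _ _ (selA bx by') (fA _ _ ax ay))); rewrite e; apply: (fA).
    - by case: (gA _ (fA _ _ (selA bx' by'') (fA _ _ ax' ay'))); rewrite -e; apply: (fA).
    - have [-> ->] := finj _ _ _ _ ax ay ax' ay' e.
      by move: E1 E2; case: bx; case: by'; case: bx'; case: by''.
  have adG' b w : A w -> Adom G' (gb b w).
    by move=> aw; exists (code b b w w); exists b, b, w, w; split.
  have adG'inv x : Adom G' x -> exists b w, A w /\ x = gb b w.
    by move=> [z [bx [by' [x' [y' [ax ay [-> _ _]]]]]]]; exists bx, x'.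
  have goodG' : good G'.
    split.
    - move=> p z z' [bx [by' [x [y [ax ay e]]]]] [bx' [by'' [x' [y' [ax' ay' e']]]]].
      move: e e' => [-> ->] [e1 e2 ->].
      have [? ?] := gbinj _ _ _ _ ax ax' e1; have [? ?] := gbinj _ _ _ _ ay ay' e2.
      by subst.
    - move=> p p' z [bx [by' [x [y [ax ay e]]]]] [bx' [by'' [x' [y' [ax' ay' e']]]]].
      move: e e' => [-> ->] [-> e2].
      by have [-> -> -> ->] := codeinj _ _ _ _ _ _ _ _ ax ay ax' ay' e2.
    - move=> x y z [bx [by' [x' [y' [ax ay [-> -> ->]]]]]].
      split; try exact: adG'.
      by have [w [aw ->]] := codeA bx by' x' y' ax ay; exact: adG'.
    - move=> x y /adG'inv [b [w [aw ->]]] /adG'inv [b' [w' [aw' ->]]].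
      by exists (code b b' w w'); exists b, b', w, w'; split.
    - right; exists a0, a1, a2; split; first by split; [|split]; exact: (adG' false).
      by [].
  apply: (maxG G' _ goodG'); split.
    move=> [[x y] z] k; have [ax ay ->] := Gchar _ _ _ k.
    by exists false, false, x, y; split.
  move=> sub.
  have k : G ((g a0, g a0), code true true a0 a0).
    by apply: sub; exists true, true, a0, a0; split.
  have [ax _ _] := Gchar _ _ _ k; exact: gA a0 h0 ax.
case: (pselect (forall c, ~ A c -> exists a, H (a, c))) => [surH|nsurH]; last first.
  exfalso.
  have [a [aa na]] : exists a, A a /\ forall c, ~ H (a, c).
    apply: contrapT => nn; apply: ntotH => a aa; apply: contrapT => nc.
    by apply: nn; exists a; split => // c hc; apply: nc; exists c.
  have [c [nc nh]] : exists c, ~ A c /\ forall a, ~ H (a, c).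
    apply: contrapT => nn; apply: nsurH => c nc; apply: contrapT => nd.
    by apply: nn; exists c; split => // a' hc; apply: nd; exists a'.
  pose H' : set (D * D) := fun q => H q \/ q = (a, c).
  apply: (maxH H'); last first.
    split.
    - move=> a1' c1 c2 [k1|[-> ->]] [k2|e2].
      + exact: hH1 k1 k2.
      + by case: e2 => ? ?; subst; case: (na _ k1).
      + by case: (na _ k2).
      + by case: e2.
    - move=> a1' a2' c1 [k1|[-> ->]] [k2|e2].
      + exact: hH2 k1 k2.
      + by case: e2 => ? ?; subst; case: (nh _ k1).
      + by case: (nh _ k2).
      + by case: e2.
    - by move=> a1' c1 [k1|[-> ->]]; [exact: hH3|].
  split; first by move=> q k; left.
  by move=> sub; apply: (nh a); apply: sub; right.
have hk c : exists a, ~ A c -> H (a, c).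
  case: (pselect (A c)) => [ac|nc]; first by exists a0.
  by have [a ha] := surH c nc; exists a.
pose k c := proj1_sig (cid (hk c)).
have kH c : ~ A c -> H (k c, c) by move=> nc; exact: (proj2_sig (cid (hk c))) nc.
have kA c : ~ A c -> A (k c) by move=> nc; exact: (hH3 _ _ (kH c nc)).1.
have kinj c c' : ~ A c -> ~ A c' -> k c = k c' -> c = c'.
  move=> nc nc' e; have q := kH c nc; rewrite e in q; exact: hH1 q (kH c' nc').
pose h d := if pselect (A d) is left _ then f a0 d else f a1 (k d).
have hA d : A (h d) by rewrite /h; case: pselect => ad; apply: (fA) => //; exact: kA.
have hinj d d' : h d = h d' -> d = d'.
  rewrite /h; case: pselect => ad; case: pselect => ad' e.
  - by have [_ ->] := finj _ _ _ _ h0 ad h0 ad' e.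
  - by have [/n01] := finj _ _ _ _ h0 ad h1 (kA _ ad') e.
  - by have [/esym/n01] := finj _ _ _ _ h1 (kA _ ad) h0 ad' e.
  - by have [_ /kinj] := finj _ _ _ _ h1 (kA _ ad) h1 (kA _ ad') e; apply.
exists (fun x y => f (h x) (h y)) => x y x' y' e.
by have [/hinj -> /hinj ->] := finj _ _ _ _ (hA x) (hA y) (hA x') (hA y') e.
Qed.

End Hessenberg.


Section Final.
Variable D : Type.

Lemma phi_ternary (Fs : seq (factor D)) : subternaric Fs -> phi Fs = num_ternary Fs.
Proof.
rewrite /phi /num_ternary; elim: Fs => //= F Fs IH h.
rewrite IH; last by move=> G hG; apply: h; right.
have := h F (or_introl erefl); case: (size F.1 == 3) /eqP => [-> //|]; lia.
Qed.

Lemma num_ternary0 (Fs : seq (factor D)) : (forall F, List.In F Fs -> size F.1 < 3) ->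
  num_ternary Fs = 0.
Proof.
rewrite /num_ternary; elim: Fs => //= F Fs IH h.
rewrite IH; last by move=> G hG; apply: h; right.
have := h F (or_introl erefl); case: (size F.1 == 3) /eqP => [-> //|]; lia.
Qed.

Definition enc (d0 : D) (e : D -> D -> D) (l : seq D) : D := foldr e d0 l.

Lemma enc_inj d0 e : (forall x y x' y', e x y = e x' y' -> x = x' /\ y = y') ->
  forall l1 l2, size l1 = size l2 -> enc d0 e l1 = enc d0 e l2 -> l1 = l2.
Proof.
move=> he; elim=> [|x l1 IH] [|y l2] //= [hs] /he [-> /IH ->] //.
Qed.

End Final.

Theorem theorem43 (D : Type) (S : seq nat) (R : assignment D -> Prop) :
  is_relation S R -> 2 <= size S -> ~ degenerate S R ->
  ter_ge S R (size S - 2) /\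
  (size S = 3 -> bond_irreducible S R) /\
  (card_rel_le_dom S R -> ter_eq S R (size S - 2)) /\
  (infinite_type D -> ter_eq S R (size S - 2)).
Proof.
move=> hrel hS hnd.
have tg : ter_ge S R (size S - 2).
  move=> Fs [hB hst]; rewrite -phi_ternary //; exact: (ter_key hrel hS hnd hB).
have card : card_rel_le_dom S R -> ter_eq S R (size S - 2).
  case=> f hf; split => //; exact: construct hf hrel hS.
split => //; split.
  move=> h3; rewrite /bond_irreducible /bond_reducible => -[Fs [hB hsz]].
  have hst : subternaric Fs by move=> F /hsz /andP [_ h]; lia.
  have h0 : num_ternary Fs = 0 by apply: num_ternary0 => F /hsz /andP [_]; rewrite h3.
  by have := tg Fs (conj hB hst); rewrite h0 h3.
split => // infD; apply: card.
have [e he] := hessenberg infD.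
have [d0 _] := next_exists infD nil.
exists (fun a => enc d0 e (map a S)) => a b _ _ hab.
have := @enc_inj _ d0 e he (map a S) (map b S) ltac:(by rewrite !size_map) hab.
by move/eq_in_map => h x xS; exact: h.
Qed.
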